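(* Let $\mathcal{G}_1,\ldots,\mathcal{G}_p$ be non-negatively weighted digraphs on the node set $\{1,\ldots,N\}$ whose union contains a directed spanning tree, and let $n\ge1$. For each $i$, let $\delta_i(x)=x-\sum_{j=1}^{\chi_i}\big(\gamma_{i,j}\beta_{i,j}^{\mathrm{T}}\otimes I_n\big)x$ for $x\in\mathbb{R}^{nN}$, with $\chi_i,\gamma_{i,j},\beta_{i,j}$ constructed from $\mathcal{G}_i$ as described in the context. Then $$\bigcap_{i=1}^p\{x\in\mathbb{R}^{nN}:\delta_i(x)=\mathbf{0}\}=\{\mathbf{1}_N\otimes u:\ u\in\mathbb{R}^n\}.$$
   Context: A weighted digraph on $\{1,\ldots,N\}$ has weights $a_{ij}\ge0$, $a_{ii}=0$, with $a_{ij}>0$ iff $(j,i)$ is an edge (directed from $j$ to $i$); its Laplacian is $L=\mathrm{diag}\{\sum_ja_{1j},\ldots,\sum_ja_{Nj}\}-[a_{ij}]$. A digraph contains a directed spanning tree if some node has a directed path to every other node; the union of graphs on the same node set has the union of the edge sets. For a node $j$, $R(j)$ is the set consisting of $j$ and all nodes reachable from $j$ by a directed path. A reach is a maximal such set: $R=R(i)$ for some $i$ with no $j$ such that $R(i)\subsetneq R(j)$. For a digraph $\mathcal{G}$ with Laplacian $L$ and reaches $R_1,\ldots,R_\chi$, the exclusive part of $R_j$ is $H_j=R_j\setminus\bigcup_{l\ne j}R_l$ and its common part is $C_j=R_j\setminus H_j$. It is known that $\mathrm{Ker}(L)$ has a basis $\gamma_1,\ldots,\gamma_\chi\in\mathbb{R}^N$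 with $\gamma_j(s)=0$ for $s\notin R_j$, $\gamma_j(s)=1$ for $s\in H_j$, $\gamma_j(s)\in(0,1)$ for $s\in C_j$, and $\sum_j\gamma_j=\mathbf{1}_N$; these are the vectors $\gamma_j$ used. For each reach $R_j$, let $V_j\subset H_j$ be the set of nodes $i$ with $R(i)=R_j$ (a strongly connected set receiving no edges from outside); let $L_{jj}$ be the principal submatrix of $L$ indexed by $V_j$, and let $v_j\in\mathbb{R}^{|V_j|}$ satisfy $v_j^{\mathrm{T}}L_{jj}=0$ and $v_j^{\mathrm{T}}\mathbf{1}_{|V_j|}=1$. Then $\beta_j\in\mathbb{R}^N$ equals $v_j$ on the coordinates in $V_j$ and $0$ elsewhere (so $\beta_j^{\mathrm{T}}L=0$). Applying this construction to $\mathcal{G}_i$ gives $\chi_i$, $\gamma_{i,j}$, $\beta_{i,j}$. $\otimes$ is the Kronecker product. *)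

(* Defs.v *)
From mathcomp Require Import all_boot all_order all_algebra.
From mathcomp Require Export mxtens.
Set Implicit Arguments. Unset Strict Implicit. Unset Printing Implicit Defensive.
Import Order.TTheory GRing.Theory Num.Theory.
Local Open Scope ring_scope.

(* A weighted digraph on {1..N} (here 'I_N) is given by its weight matrix A,
   with A i j = a_ij >= 0, a_ii = 0, and a_ij > 0 iff (j,i) is an edge j -> i. *)

Section Graphs.
Variables (R : realFieldType) (N : nat).
Implicit Types (A : 'M[R]_N).

Definition wdigraph A := (forall i j, 0 <= A i j) /\ (forall i, A i i = 0).

Definition edge A : rel 'I_N := fun j i => 0 < A i j.

Definition laplacian A : 'M[R]_N :=
  \matrix_(i, j) ((i == j)%:R * (\sum_k A i k) - A i j).

Definition reachset A (j : 'I_N) : {set 'I_N} := [set i | connect (edge A) j i].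

Definition is_reach A (S : {set 'I_N}) : bool :=
  [exists i, (S == reachset A i) && [forall j, ~~ (reachset A i \proper reachset A j)]].

Definition reaches A : {set {set 'I_N}} := [set S | is_reach A S].

Definition excl_part A (S : {set 'I_N}) : {set 'I_N} :=
  S :\: \bigcup_(S' in reaches A | S' != S) S'.
Definition common_part A (S : {set 'I_N}) : {set 'I_N} := S :\: excl_part A S.

Definition root_part A (S : {set 'I_N}) : {set 'I_N} := [set i | reachset A i == S].

(* gam S = the kernel vector gamma attached to the reach S *)
Definition gamma_family A (gam : {set 'I_N} -> 'cV[R]_N) : Prop :=
  [/\ forall S, S \in reaches A -> laplacian A *m gam S = 0,
      forall S s, S \in reaches A -> s \notin S -> gam S s 0 = 0,
      forall S s, S \in reaches A -> s \in excl_part A S -> gam S s 0 = 1,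
      forall S s, S \in reaches A -> s \in common_part A S ->
                  0 < gam S s 0 < 1 &
      \sum_(S in reaches A) gam S = const_mx 1].

Definition beta_family A (bet : {set 'I_N} -> 'cV[R]_N) : Prop :=
  [/\ forall S s, S \in reaches A -> s \notin root_part A S -> bet S s 0 = 0,
      forall S t, S \in reaches A -> t \in root_part A S ->
        \sum_(s in root_part A S) bet S s 0 * laplacian A s t = 0 &
      forall S, S \in reaches A -> \sum_(s in root_part A S) bet S s 0 = 1].

Definition delta n A (gam bet : {set 'I_N} -> 'cV[R]_N) (x : 'cV[R]_(N * n)) :
  'cV[R]_(N * n) :=
  x - \sum_(S in reaches A) ((gam S *m (bet S)^T) *t (1%:M : 'M[R]_n)) *m x.

End Graphs.

Definition union_edge (R : realFieldType) (N p : nat) (A : 'I_p -> 'M[R]_N)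
  : rel 'I_N := fun j i => [exists k, 0 < A k i j].

Definition has_spanning_tree (N : nat) (e : rel 'I_N) : Prop :=
  exists r : 'I_N, forall i, connect e r i.

(* Main.v *)
Require Import Defs.
From mathcomp Require Import all_boot all_order all_algebra.
Import Order.TTheory GRing.Theory Num.Theory.
Local Open Scope ring_scope.

Lemma lap_row (R : realFieldType) N (A : 'M[R]_N) (y : 'I_N -> R) s :
  \sum_t laplacian A s t * y t = \sum_t A s t * (y s - y t).
Proof.
rewrite /laplacian; under eq_bigr do rewrite mxE mulrBl.
rewrite sumrB; under [X in _ = X]eq_bigr do rewrite mulrBr.
rewrite [X in _ = X]sumrB; congr (_ - _).
rewrite -mulr_suml [LHS](bigD1 s) //= eqxx mul1r.
rewrite [X in _ + X = _]big1 ?addr0 // => t /negbTE.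
by rewrite eq_sym => ->; rewrite mul0r mul0r.
Qed.

Lemma ker_max (R : realFieldType) N p (A : 'I_p -> 'M[R]_N) (y : 'I_N -> R) r :
  (forall i, wdigraph (A i)) ->
  (forall r', connect (union_edge A) r r') ->
  (forall i s, \sum_t laplacian (A i) s t * y t = 0) ->
  forall s, y s <= y r.
Proof.
move=> wd conn ker.
case: (@arg_maxP _ _ _ r predT y isT) => m _ Hm.
have back : forall j i, union_edge A j i -> y i = y m -> y j = y m.
  move=> j i /existsP [k Hk] Hi.
  have := ker k i; rewrite lap_row => H0.
  have nn : forall t, true -> 0 <= A k i t * (y i - y t).
    move=> t _; case: (wd k) => Hnn _; apply: mulr_ge0 => //.
    by rewrite Hi subr_ge0; apply: Hm.
  have /eqP := psumr_eq0P nn H0 (i := j) isT.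
  rewrite mulf_eq0 => /orP [/eqP Ha|].
    by move: Hk; rewrite Ha ltxx.
  by rewrite subr_eq0 => /eqP <-.
have pathP : forall x q, path (union_edge A) x q -> y (last x q) = y m -> y x = y m.
  move=> x q; elim: q x => [|z q IH] x //= /andP [e pq] Hl.
  by apply: (back x z e); apply: IH.
move=> s; have /connectP [q pq Hq] := conn m.
rewrite (pathP _ _ pq); [exact: Hm | by rewrite -Hq].
Qed.

Lemma reindex_tens (R : realFieldType) N n (F : 'I_(N * n) -> R) :
  \sum_j F j = \sum_t \sum_l F (mxtens_index (t, l)).
Proof.
rewrite pair_big /= (reindex (@mxtens_index N n)) /=.
  by apply: eq_bigr => -[t l].
by exists (@mxtens_unindex N n) => j _; [apply: mxtens_indexK | apply: mxtens_unindexK].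
Qed.

Theorem lemma8 (R : realFieldType) (N p n : nat) (A : 'I_p -> 'M[R]_N)
  (gam bet : 'I_p -> {set 'I_N} -> 'cV[R]_N) :
  (forall i, wdigraph (A i)) ->
  has_spanning_tree (union_edge A) ->
  (1 <= n)%N ->
  (forall i, gamma_family (A i) (gam i)) ->
  (forall i, beta_family (A i) (bet i)) ->
  forall x : 'cV[R]_(N * n),
    (forall i, delta (A i) (gam i) (bet i) x = 0) <->
    (exists u : 'cV[R]_n, x = (const_mx 1 : 'cV[R]_N) *t u).
Proof.
move=> wd [r conn] _ gf bf x; split.
  move=> Hd.
  have HL : forall i, (laplacian (A i) *t (1%:M : 'M[R]_n)) *m x = 0.
    move=> i.
    have Ex : x = \sum_(S in reaches (A i))
        ((gam i S *m (bet i S)^T) *t (1%:M : 'M[R]_n)) *m x.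
      by apply/eqP; rewrite -subr_eq0; apply/eqP; exact: Hd i.
    rewrite {1}Ex mulmx_sumr big1 // => S HS.
    case: (gf i) => g1 _ _ _ _.
    by rewrite mulmxA tensmx_mul mul1mx mulmxA g1 // mul0mx tens0mx mul0mx.
  have Hy : forall k i s,
      \sum_t laplacian (A i) s t * x (mxtens_index (t, k)) 0 = 0.
    move=> k i s.
    have /matrixP /(_ (mxtens_index (s, k)) 0) := HL i.
    rewrite !mxE reindex_tens => H; rewrite -[in RHS]H; apply: eq_bigr => t _.
    under eq_bigr do rewrite tensmxE.
    rewrite (bigD1 k) //= [1%:M k k]mxE eqxx mulr1 [X in _ + X]big1 ?addr0 // => l /negbTE Hl.
    by rewrite [1%:M k l]mxE eq_sym Hl mulr0 mul0r.
  have Hc : forall k s, x (mxtens_index (s, k)) 0 = x (mxtens_index (r, k)) 0.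
    move=> k s; apply/eqP; rewrite eq_le; apply/andP; split.
      exact: (@ker_max _ _ _ A (fun t => x (mxtens_index (t, k)) 0) r wd conn (Hy k)).
    have := @ker_max _ _ _ A (fun t => - x (mxtens_index (t, k)) 0) r wd conn _ s.
    rewrite lerN2; apply => i s'.
    by under eq_bigr do rewrite mulrN; rewrite sumrN Hy oppr0.
  exists (\col_k x (mxtens_index (r, k)) 0).
  apply/matrixP => j c; case: (mxtens_indexP j) => s k.
  rewrite !mxE mxtens_indexK /= mul1r (ord1 c); exact: Hc.
move=> [u ->] i; rewrite /delta; apply/eqP; rewrite subr_eq0; apply/eqP.
case: (gf i) => _ _ _ _ gsum; case: (bf i) => b0 _ b1.
have Hb : forall S, S \in reaches (A i) ->
    (bet i S)^T *m (const_mx 1 : 'cV[R]_N) = 1%:M.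
  move=> S HS; apply/matrixP => a b; rewrite !ord1 !mxE.
  rewrite (bigID (mem (root_part (A i) S))) /= [X in _ + X]big1 ?addr0.
    rewrite -[RHS](b1 S HS); by apply: eq_bigr => s _; rewrite !mxE mulr1.
  by move=> s Hs; rewrite !mxE b0 // mul0r.
transitivity (\sum_(S in reaches (A i)) (gam i S *t u)).
  apply/matrixP => a b; rewrite -gsum summxE; case: (mxtens_indexP a) => s k.
  rewrite [LHS]mxE mxtens_indexK /= summxE mulr_suml; apply: eq_bigr => S _.
  by rewrite !mxE mxtens_indexK.
apply: eq_bigr => S HS.
have E := tensmx_mul (gam i S *m (bet i S)^T) (1%:M : 'M[R]_n) (const_mx 1 : 'cV[R]_N) u.
rewrite -mulmxA Hb // mulmx1 mul1mx in E; exact: (esym E).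
Qed.
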